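(* For $n\ge1$, $$\left|\Pi_n\wr C_2(1^11^1,1^11^2,1^22^1)\right|=\left|\Pi_n\wr C_2(1^11^2,1^12^1,1^12^2)\right|=\left|\Pi_n\wr C_2(1^11^2,1^12^1,1^22^1)\right|=2n.$$
   Context: For $n\ge0$ let $[n]=\{1,\dots,n\}$. A $2$-colored set partition of $[n]$ is a set partition of $[n]$ together with an assignment of a color from $\{1,2\}$ to each element; $\Pi_n\wr C_2$ is the set of these. For a set $S$ of patterns, $\Pi_n\wr C_2(S)$ is the set of such colored partitions avoiding every pattern in $S$ in the pattern sense. For the patterns used here: $\sigma$ contains $1^11^1$ iff two elements in the same block have the same color; $1^11^2$ iff there are $i<j$ in the same block with $i$ colored $1$ and $j$ colored $2$; $1^12^1$ iff two elements in different blocks have the same color; $1^12^2$ iff there are $i<j$ in different blocks with $i$ colored $1$ and $j$ colored $2$; $1^22^1$ iff there are $i<j$ in different blocks with $i$ colored $2$ and $j$ colored $1$. *)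

(* Defs.v *)
From mathcomp Require Import all_boot.
Set Implicit Arguments. Unset Strict Implicit. Unset Printing Implicit Defensive.

(* The ground set [n] = {1,...,n} is represented by 'I_n = {0,...,n-1}
   (order-preserving shift by one).  Colors {1,2} are represented by 'I_2,
   color 1 = ord0 and color 2 = ord_max. *)
Definition col1 : 'I_2 := ord0.
Definition col2 : 'I_2 := ord_max.

Definition colored_partition (n : nat) :=
  ({set {set 'I_n}} * {ffun 'I_n -> 'I_2})%type.

Definition is_colored_partition n (s : colored_partition n) : bool :=
  partition s.1 [set: 'I_n].

Definition same_block n (P : {set {set 'I_n}}) (i j : 'I_n) : bool :=
  [exists B in P, (i \in B) && (j \in B)].

Inductive pattern := p1111 | p1112 | p1121 | p1122 | p1221.
(* p1111 = 1^1 1^1, p1112 = 1^1 1^2, p1121 = 1^1 2^1,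
   p1122 = 1^1 2^2, p1221 = 1^2 2^1 *)

Definition contains n (s : colored_partition n) (p : pattern) : bool :=
  let P := s.1 in let c := s.2 in
  match p with
  | p1111 => [exists i : 'I_n, exists j : 'I_n, (i < j) && same_block P i j && (c i == c j)]
  | p1112 => [exists i : 'I_n, exists j : 'I_n, (i < j) && same_block P i j
                                  && (c i == col1) && (c j == col2)]
  | p1121 => [exists i : 'I_n, exists j : 'I_n, (i < j) && ~~ same_block P i j && (c i == c j)]
  | p1122 => [exists i : 'I_n, exists j : 'I_n, (i < j) && ~~ same_block P i j
                                  && (c i == col1) && (c j == col2)]
  | p1221 => [exists i : 'I_n, exists j : 'I_n, (i < j) && ~~ same_block P i j
                                  && (c i == col2) && (c j == col1)]
  end.

Definition avoids n (S : seq pattern) (s : colored_partition n) : bool :=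
  all (fun p => ~~ contains s p) S.

Definition num_avoiding (n : nat) (S : seq pattern) : nat :=
  #|[set s : colored_partition n | is_colored_partition s && avoids S s]|.

(* Main.v *)
Require Import Defs.
From mathcomp Require Import all_boot zify.
Set Implicit Arguments. Unset Strict Implicit. Unset Printing Implicit Defensive.

Section Infra.
Variable n : nat.

Lemma sb_sym (P : {set {set 'I_n}}) i j : same_block P i j = same_block P j i.
Proof. by apply/existsP/existsP => -[B /andP[PB /andP[h1 h2]]]; exists B; rewrite PB h1 h2. Qed.

Lemma sbE (P : {set {set 'I_n}}) i j : partition P [set: 'I_n] ->
  same_block P i j = (j \in pblock P i).
Proof.
case/and3P => /eqP cP tP _.
have ci : i \in cover P by rewrite cP inE.
apply/existsP/idP => [[B /andP[PB /andP[iB jB]]]|jp].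
  by rewrite (def_pblock tP PB iB).
by exists (pblock P i); rewrite pblock_mem // mem_pblock ci jp.
Qed.

Lemma sb_refl (P : {set {set 'I_n}}) i : partition P [set: 'I_n] -> same_block P i i.
Proof. move=> pP; rewrite sbE // mem_pblock; case/and3P: pP => /eqP -> _ _; by rewrite inE. Qed.

Lemma sb_trans (P : {set {set 'I_n}}) i j k : partition P [set: 'I_n] ->
  same_block P i j -> same_block P j k -> same_block P i k.
Proof.
move=> pP; rewrite !sbE // => h1 h2; case/and3P: pP => _ tP _.
by rewrite -(same_pblock tP h1).
Qed.

Lemma part_ext (P Q : {set {set 'I_n}}) : partition P [set: 'I_n] -> partition Q [set: 'I_n] ->
  (forall i j, same_block P i j = same_block Q i j) -> P = Q.
Proof.
move=> pP pQ H.
have key : forall (P Q : {set {set 'I_n}}), partition P [set: 'I_n] -> partition Q [set: 'I_n] ->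
  (forall i j, same_block P i j = same_block Q i j) -> P \subset Q.
  move=> P' Q' pP' pQ' H'; apply/subsetP => B PB.
  have := pP'; case/and3P => /eqP cP tP nP.
  have : B != set0 by apply: contraNneq nP => <-.
  case/set0Pn => i iB.
  have -> : B = pblock Q' i.
    rewrite -(def_pblock tP PB iB); apply/setP => j.
    by rewrite -!sbE // H'.
  have := pQ'; case/and3P => /eqP cQ _ _.
  by apply: pblock_mem; rewrite cQ inE.
by apply/eqP; rewrite eqEsubset !key //; move=> i j; rewrite H.
Qed.

Definition Pk (f : 'I_n -> nat) : {set {set 'I_n}} :=
  equivalence_partition [rel i j | f i == f j] [set: 'I_n].

Lemma Pk_eqi (f : 'I_n -> nat) : {in [set: 'I_n] & &, equivalence_rel [rel i j | f i == f j]}.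
Proof. by move=> x y z _ _ _ /=; split => // /eqP ->. Qed.

Lemma Pk_part (f : 'I_n -> nat) : partition (Pk f) [set: 'I_n].
Proof. exact: equivalence_partitionP (Pk_eqi f). Qed.

Lemma Pk_sb (f : 'I_n -> nat) i j : same_block (Pk f) i j = (f i == f j).
Proof. by rewrite sbE ?Pk_part // (pblock_equivalence_partition (Pk_eqi f)) ?inE. Qed.

Definition colb (b : bool) : 'I_2 := if b then col2 else col1.

Lemma colbK (x : 'I_2) : colb (x == col2) = x.
Proof. by apply/val_inj; case: x => [[|[|m]] //]. Qed.
Lemma col1E (x : 'I_2) : (x == col1) = ~~ (x == col2).
Proof. by case: x => [[|[|m]] //]. Qed.
Lemma colE (x y : 'I_2) : (x == y) = ((x == col2) == (y == col2)).
Proof. by case: x => [[|[|m]] //] ?; case: y => [[|[|m']] //]. Qed.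
Lemma colb_inj : injective colb. Proof. by case; case. Qed.
Lemma colb2 u : (colb u == col2) = u. Proof. by case: u. Qed.

Lemma sym_ext (R S : rel 'I_n) : (forall i j, R i j = R j i) -> (forall i j, S i j = S j i) ->
  (forall i, R i i) -> (forall i, S i i) -> (forall i j : 'I_n, i < j -> R i j = S i j) ->
  forall i j, R i j = S i j.
Proof.
move=> sR sS rR rS H i j; case: (ltngtP i j) => h; first exact: H.
  by rewrite sR sS H.
have e : i = j by apply: val_inj; exact: h.
by rewrite e rR rS.
Qed.

Lemma thr_ex (b : 'I_n -> bool) : (forall i j : 'I_n, i < j -> b j -> b i) ->
  exists2 a, a <= n & forall i : 'I_n, b i = (i < a).
Proof.
move=> H.
pose P m := (m == n) || [exists i : 'I_n, (i == m :> nat) && ~~ b i].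
have Pn : exists m, P m by exists n; apply/orP; left.
case: (ex_minnP Pn) => m Pm Hmin; exists m; first by apply: Hmin; apply/orP; left.
move=> i; case: (ltnP i m) => him.
  apply/negP => /negP nb.
  have : P i by rewrite /P; apply/orP; right; apply/existsP; exists i; rewrite eqxx nb.
  by move/Hmin; rewrite leqNgt him.
case/orP: Pm => [/eqP em|/existsP [i' /andP [/eqP e nb]]].
  by move: (ltn_ord i); lia.
apply/negP => bi; move: nb; case: (ltngtP i' i) => h.
  by rewrite (H _ _ h bi).
  by move=> _; lia.
have e2 : i' = i by apply: val_inj; exact: h.
by rewrite e2 bi.
Qed.

Lemma thr_inj a a' : a <= n -> a' <= n -> (forall i : 'I_n, (i < a) = (i < a')) -> a = a'.
Proof.
move=> ha ha' H; case: (ltngtP a a') => // h.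
  have := H (Ordinal (leq_trans h ha')) ; rewrite /= ltnn h //.
have := H (Ordinal (leq_trans h ha)) ; rewrite /= ltnn h //.
Qed.

End Infra.
Section Count.
Variables (n : nat) (D : finType) (bx : D -> 'I_n -> bool) (kx : D -> 'I_n -> nat) (S : seq pattern).

Definition Fm (x : D) : colored_partition n := (Pk (kx x), [ffun i => colb (bx x i)]).

Lemma count_main :
 (forall x, avoids S (Fm x)) ->
 (forall x y, (forall i, bx x i = bx y i) ->
    (forall i j, (kx x i == kx x j) = (kx y i == kx y j)) -> x = y) ->
 (forall s : colored_partition n, is_colored_partition s -> avoids S s ->
    exists x, (forall i, (s.2 i == col2) = bx x i) /\
              forall i j, same_block s.1 i j = (kx x i == kx x j)) ->
 num_avoiding n S = #|D|.
Proof.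
move=> Hav Hinj Hch.
have Finj : injective Fm.
  move=> x y [e1 e2]; apply: Hinj.
    move=> i; apply: colb_inj; move/ffunP: e2 => /(_ i); by rewrite !ffunE.
  by move=> i j; rewrite -!Pk_sb e1.
rewrite /num_avoiding.
have -> : [set s : colored_partition n | is_colored_partition s && avoids S s] = Fm @: setT.
  apply/setP => s; rewrite inE; apply/idP/imsetP.
    case/andP => ps as_; have [x [h1 h2]] := Hch s ps as_.
    exists x; first by rewrite inE.
    case: s ps as_ h1 h2 => P c /= ps _ h1 h2; congr pair.
      by apply: part_ext => // [|i j]; [exact: Pk_part | rewrite Pk_sb h2].
    by apply/ffunP => i; rewrite ffunE -h1 colbK.
  by case=> x _ ->; rewrite Hav andbT; exact: Pk_part.
by rewrite card_imset // cardsT.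
Qed.
End Count.
Definition okp (p : pattern) (sb bi bj : bool) : bool :=
  match p with
  | p1111 => ~~ (sb && (bi == bj))
  | p1112 => ~~ (sb && ~~ bi && bj)
  | p1121 => ~~ (~~ sb && (bi == bj))
  | p1122 => ~~ (~~ sb && ~~ bi && bj)
  | p1221 => ~~ (~~ sb && bi && ~~ bj)
  end.

Lemma containsE n (s : colored_partition n) p : contains s p =
  [exists i : 'I_n, exists j : 'I_n, (i < j) && ~~ okp p (same_block s.1 i j) (s.2 i == col2) (s.2 j == col2)].
Proof.
case: p; apply: eq_existsb => i; apply: eq_existsb => j; rewrite /=;
  move: (same_block _ i j) (s.2 i) (s.2 j) => q x y; rewrite ?col1E ?(colE x y);
  by case: (i < j); case: q; case: (x == col2); case: (y == col2).
Qed.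

Lemma okP n (s : colored_partition n) p :
  reflect (forall i j : 'I_n, i < j -> okp p (same_block s.1 i j) (s.2 i == col2) (s.2 j == col2))
          (~~ contains s p).
Proof.
rewrite containsE; apply: (iffP idP).
  move=> H i j lij; apply: contraR H => h; apply/existsP; exists i; apply/existsP; exists j.
  by rewrite lij.
move=> H; apply/negP => /existsP [i /existsP [j /andP [lij]]].
by rewrite H.
Qed.

Section Abstract.
Variables (n : nat) (sb : rel 'I_n) (b : 'I_n -> bool).
Hypotheses (sR : forall i, sb i i) (sS : forall i j, sb i j = sb j i)
  (sT : forall i j k, sb i j -> sb j k -> sb i k).

Lemma lt_gen (Q : 'I_n -> 'I_n -> Prop) : (forall i j, Q i j -> Q j i) -> (forall i, Q i i) ->
  (forall i j : 'I_n, i < j -> Q i j) -> forall i j, Q i j.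
Proof.
move=> sQ rQ H i j; case: (ltngtP i j) => h; first exact: H.
  by apply: sQ; apply: H.
have e : i = j by apply: val_inj; exact: h.
by rewrite e.
Qed.

Lemma split_blocks : (forall i j : 'I_n, i < j -> okp p1121 (sb i j) (b i) (b j)) ->
  (forall i j : 'I_n, sb i j) \/
  ((forall i j : 'I_n, sb i j = (b i == b j)) /\ exists i j : 'I_n, b i /\ ~~ b j).
Proof.
move=> H.
have Hc : forall i j, b i == b j -> sb i j.
  apply: lt_gen => [i j h /eqP e|i _|i j lij]; first by rewrite sS h // e.
    exact: sR.
  by move: (H i j lij) => /=; case: (sb i j); case: (b i == b j).
case: (boolP [forall i, forall j, sb i j]) => [/forallP h|].
  by left => i j; move/forallP: (h i).
rewrite negb_forall => /existsP [i0]; rewrite negb_forall => /existsP [j0 nij].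
have d : b i0 != b j0 by apply: contra nij; exact: Hc.
right; split.
  move=> i j; apply/idP/idP; last exact: Hc.
  move=> sij; apply/negPn/negP => dij.
  have all_i : forall k, sb k i.
    move=> k; case: (boolP (b k == b i)); first exact: Hc.
    move=> dk; apply: (sT (j:=j)); last by rewrite sS.
    by apply: Hc; move: dk dij; case: (b k); case: (b i); case: (b j).
  by move: nij; rewrite (sT (all_i i0)) // sS all_i.
move: d; case e: (b i0); case f: (b j0) => // _.
  by exists i0, j0; rewrite e f.
by exists j0, i0; rewrite e f.
Qed.

End Abstract.
Definition DT n := ('I_n.+1 + 'I_n.-1)%type.

Definition bC n (x : DT n) (i : 'I_n) : bool :=
  match x with inl a => i < a | inr k => k < i end.
Definition kC n (x : DT n) (i : 'I_n) : nat :=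
  match x with inl _ => 0 | inr k => nat_of_bool (k < i) end.
Definition bB n (x : DT n) (i : 'I_n) : bool :=
  match x with inl a => i < a | inr k => i <= k end.
Definition kB n (x : DT n) (i : 'I_n) : nat :=
  match x with inl _ => 0 | inr k => nat_of_bool (i <= k) end.
Definition bA n (x : DT n) (i : 'I_n) : bool :=
  match x with inl a => a <= i | inr k => (@nat_of_ord n i == @nat_of_ord n.-1 k) || (k.+1 < i) end.
Definition kA n (x : DT n) (i : 'I_n) : nat :=
  match x with inl _ => i | inr k => if @nat_of_ord n i == k.+1 then nat_of_ord k else nat_of_ord i end.

Section Abstract2.
Variables (n : nat) (sb : rel 'I_n) (b : 'I_n -> bool).
Hypotheses (sR : forall i, sb i i) (sS : forall i j, sb i j = sb j i)
  (sT : forall i j k, sb i j -> sb j k -> sb i k).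

Lemma classC_ex :
  (forall i j : 'I_n, i < j -> okp p1112 (sb i j) (b i) (b j)) ->
  (forall i j : 'I_n, i < j -> okp p1121 (sb i j) (b i) (b j)) ->
  (forall i j : 'I_n, i < j -> okp p1221 (sb i j) (b i) (b j)) ->
  exists x : DT n, (forall i, b i = bC x i) /\ (forall i j, sb i j = (kC x i == kC x j)).
Proof.
move=> H2 H3 H5; case: (split_blocks sR sS sT H3) => [hall | [hsb [i0 [j0 [bi0 bj0]]]]].
  have [a ha hb] : exists2 a, a <= n & forall i : 'I_n, b i = (i < a).
    apply: thr_ex => i j lij; move: (H2 i j lij); rewrite /= hall.
    by case: (b i); case: (b j).
  have ha' : a < n.+1 by [].
  by exists (inl (Ordinal ha')); split => [i|i j] /=; [exact: hb | rewrite hall].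
have [a ha hb] : exists2 a, a <= n & forall i : 'I_n, ~~ b i = (i < a).
  apply: thr_ex => i j lij; move: (H5 i j lij); rewrite /= hsb.
  by case: (b i); case: (b j).
have a0 : 0 < a by move: (hb j0); rewrite bj0 => /esym h; lia.
have an : a < n by move: (hb i0) (ltn_ord i0); rewrite bi0 => /esym h; lia.
have ha' : a.-1 < n.-1 by lia.
have hbi : forall i : 'I_n, b i = (a.-1 < i).
  by move=> i; move: (hb i); case: (b i) => /esym h; lia.
exists (inr (Ordinal ha')); split => [i|i j] /=; first exact: hbi.
by rewrite hsb !hbi; case: (_ < i); case: (_ < j).
Qed.

Lemma classB_ex :
  (forall i j : 'I_n, i < j -> okp p1112 (sb i j) (b i) (b j)) ->
  (forall i j : 'I_n, i < j -> okp p1121 (sb i j) (b i) (b j)) ->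
  (forall i j : 'I_n, i < j -> okp p1122 (sb i j) (b i) (b j)) ->
  exists x : DT n, (forall i, b i = bB x i) /\ (forall i j, sb i j = (kB x i == kB x j)).
Proof.
move=> H2 H3 H5; case: (split_blocks sR sS sT H3) => [hall | [hsb [i0 [j0 [bi0 bj0]]]]].
  have [a ha hb] : exists2 a, a <= n & forall i : 'I_n, b i = (i < a).
    apply: thr_ex => i j lij; move: (H2 i j lij); rewrite /= hall.
    by case: (b i); case: (b j).
  have ha' : a < n.+1 by [].
  by exists (inl (Ordinal ha')); split => [i|i j] /=; [exact: hb | rewrite hall].
have [a ha hb] : exists2 a, a <= n & forall i : 'I_n, b i = (i < a).
  apply: thr_ex => i j lij; move: (H5 i j lij); rewrite /= hsb.
  by case: (b i); case: (b j).
have a0 : 0 < a by move: (hb i0); rewrite bi0 => h; lia.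
have an : a < n by move: (hb j0) (ltn_ord j0); rewrite (negbTE bj0) => h; lia.
have ha' : a.-1 < n.-1 by lia.
have hbi : forall i : 'I_n, b i = (i <= a.-1).
  by move=> i; rewrite hb; lia.
exists (inr (Ordinal ha')); split => [i|i j] /=; first exact: hbi.
by rewrite hsb !hbi; case: (i <= _); case: (j <= _).
Qed.

End Abstract2.
Section Abstract3.
Variables (n : nat) (sb : rel 'I_n) (b : 'I_n -> bool).
Hypotheses (sR : forall i, sb i i) (sS : forall i j, sb i j = sb j i)
  (sT : forall i j k, sb i j -> sb j k -> sb i k).

Lemma classA_ex :
  (forall i j : 'I_n, i < j -> okp p1111 (sb i j) (b i) (b j)) ->
  (forall i j : 'I_n, i < j -> okp p1112 (sb i j) (b i) (b j)) ->
  (forall i j : 'I_n, i < j -> okp p1221 (sb i j) (b i) (b j)) ->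
  exists x : DT n, (forall i, b i = bA x i) /\ (forall i j, sb i j = (kA x i == kA x j)).
Proof.
move=> H1 H2 H5.
have Hlt : forall i j : 'I_n, i < j -> sb i j = (b i && ~~ b j).
  move=> i j lij; move: (H1 i j lij) (H2 i j lij) (H5 i j lij) => /=.
  by case: (sb i j); case: (b i); case: (b j).
have gen : forall x : DT n, (forall i j : 'I_n, i < j -> sb i j = (kA x i == kA x j)) ->
    forall i j, sb i j = (kA x i == kA x j).
  move=> x h; apply: lt_gen => [i j|i|]; [by rewrite sS eq_sym => -> | by rewrite sR eqxx | exact: h].
case: (boolP [exists i : 'I_n, exists j : 'I_n, (i < j) && b i && ~~ b j]) => [|none]; last first.
  have none' : forall i j : 'I_n, i < j -> b i -> b j.
    move=> i j lij bi; apply/negPn/negP => nbj; move/negP: none; apply.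
    by apply/existsP; exists i; apply/existsP; exists j; rewrite lij bi nbj.
  have [a ha hb] : exists2 a, a <= n & forall i : 'I_n, ~~ b i = (i < a).
    apply: thr_ex => i j lij; apply: contra; exact: none' lij.
  have ha' : a < n.+1 by [].
  have hbi : forall i : 'I_n, b i = (a <= i).
    by move=> i; move: (hb i); case: (b i) => /esym h; lia.
  exists (inl (Ordinal ha')); split; first exact: hbi.
  apply: gen => i j lij /=; rewrite Hlt //.
  have -> : b i && ~~ b j = false.
    by move: (none' i j lij); case: (b i); case: (b j) => //= /(_ isT).
  by apply/esym/eqP; lia.
case/existsP => k /existsP [l /andP [/andP [lkl bk] nbl]].
have skl : sb k l by rewrite Hlt // bk nbl.
have Ha : forall i : 'I_n, i < k -> ~~ b i.
  move=> i lik; apply/negP => bi.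
  have sil : sb i l by rewrite Hlt ?bi ?nbl //; lia.
  have : sb i k by apply: (sT sil); rewrite sS.
  by rewrite Hlt // bk andbF.
have Hb : forall i : 'I_n, l < i -> b i.
  move=> i lli; apply/negPn/negP => nbi.
  have ski : sb k i by rewrite Hlt ?bk ?nbi //; lia.
  have : sb l i by apply: (sT _ ski); rewrite sS.
  by rewrite Hlt // (negbTE nbl).
have Hc : forall i : 'I_n, k < i -> i < l -> False.
  move=> i lki lil; case: (boolP (b i)) => bi.
    have sil : sb i l by rewrite Hlt ?bi ?nbl.
    have : sb k i by apply: (sT skl); rewrite sS.
    by rewrite Hlt // bi andbF.
  have ski : sb k i by rewrite Hlt ?bk ?bi.
  have : sb i l by apply: (sT _ skl); rewrite sS.
  by rewrite Hlt // (negbTE bi).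
have el : nat_of_ord l = k.+1.
  apply/eqP; rewrite eqn_leq lkl andbT; apply/negP => h.
  have hk : k.+1 < n by move: (ltn_ord l); lia.
  apply: (Hc (Ordinal hk)) => /=; lia.
have hk : k < n.-1 by move: (ltn_ord l); lia.
have hbi : forall i : 'I_n, b i = (nat_of_ord i == nat_of_ord k) || (k.+1 < i).
  move=> i; case: (ltngtP i k) => h.
  - by rewrite (negbTE (Ha i h)); lia.
  - case: (ltngtP i l) => h2.
    + by exfalso; lia.
    + by rewrite Hb //; lia.
    + have e : i = l by apply: val_inj; exact: h2.
      by rewrite e (negbTE nbl); lia.
  - have e : i = k by apply: val_inj; exact: h.
    by rewrite e bk; apply/esym/orP; left.
exists (inr (Ordinal hk)); split; first exact: hbi.
apply: gen => i j lij /=; rewrite Hlt // !hbi.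
case: ifP => /eqP h1; case: ifP => /eqP h2; apply/idP/idP; lia.
Qed.

End Abstract3.
Lemma card_DT n : 1 <= n -> #|{: DT n}| = 2 * n.
Proof. move=> h; rewrite card_sum !card_ord; lia. Qed.

Lemma avoids3 n (s : colored_partition n) p1 p2 p3 :
  avoids [:: p1; p2; p3] s = [&& ~~ contains s p1, ~~ contains s p2 & ~~ contains s p3].
Proof. by rewrite /avoids /= andbT. Qed.

Lemma testC n (x : DT n) : avoids [:: p1112; p1121; p1221] (Fm (@bC n) (@kC n) x).
Proof.
rewrite avoids3; apply/and3P; split; apply/okP => i j lij;
rewrite /= !Pk_sb !ffunE !colb2; case: x => [a|k] /=; lia.
Qed.
Lemma injC n : forall x y : DT n, (forall i, bC x i = bC y i) ->
    (forall i j, (kC x i == kC x j) = (kC y i == kC y j)) -> x = y.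
Proof.
  move=> [a|k] [a'|k'] /= hb hk.
  + congr inl; apply: val_inj; apply: (thr_inj (n := n)); [exact: (ltn_ord a) | exact: (ltn_ord a') | exact: hb].
  + exfalso; have h0 : 0 < n by move: (ltn_ord k'); lia.
    have h1 : n.-1 < n by lia.
    move: (hk (Ordinal h0) (Ordinal h1)) => /=; move: (ltn_ord k'); lia.
  + exfalso; have h0 : 0 < n by move: (ltn_ord k); lia.
    have h1 : n.-1 < n by lia.
    move: (hk (Ordinal h0) (Ordinal h1)) => /=; move: (ltn_ord k); lia.
  + congr inr; apply: val_inj.
    have : k.+1 = k'.+1.
      apply: (thr_inj (n := n)); [move: (ltn_ord k) | move: (ltn_ord k') | ]; try lia.
      by move=> i; move: (hb i); lia.
    by case.
Qed.

Lemma injB n : forall x y : DT n, (forall i, bB x i = bB y i) ->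
    (forall i j, (kB x i == kB x j) = (kB y i == kB y j)) -> x = y.
Proof.
  move=> [a|k] [a'|k'] /= hb hk.
  + congr inl; apply: val_inj; apply: (thr_inj (n := n)); [exact: (ltn_ord a) | exact: (ltn_ord a') | exact: hb].
  + exfalso; have h0 : 0 < n by move: (ltn_ord k'); lia.
    have h1 : n.-1 < n by lia.
    move: (hk (Ordinal h0) (Ordinal h1)) => /=; move: (ltn_ord k'); lia.
  + exfalso; have h0 : 0 < n by move: (ltn_ord k); lia.
    have h1 : n.-1 < n by lia.
    move: (hk (Ordinal h0) (Ordinal h1)) => /=; move: (ltn_ord k); lia.
  + congr inr; apply: val_inj.
    have : k.+1 = k'.+1.
      apply: (thr_inj (n := n)); [move: (ltn_ord k) | move: (ltn_ord k') | ]; try lia.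
      by move=> i; move: (hb i); lia.
    by case.
Qed.

Lemma injA n : forall x y : DT n, (forall i, bA x i = bA y i) ->
    (forall i j, (kA x i == kA x j) = (kA y i == kA y j)) -> x = y.
Proof.
  move=> [a|k] [a'|k'] /= hb hk.
  + (congr inl; apply: val_inj; apply: (thr_inj (n := n)); [exact: (ltn_ord a) | exact: (ltn_ord a') | ]).
    (by move=> i; move: (hb i); case: (ltnP i a); case: (ltnP i a')).
  + exfalso; have h0 : k' < n by move: (ltn_ord k'); lia.
    have h1 : k'.+1 < n by move: (ltn_ord k'); lia.
    move: (hb (Ordinal h0)) (hb (Ordinal h1)) => /=.
    rewrite eqxx (gtn_eqF (ltnSn _)) ltnn /=.
    move=> h2 /negbT h3; lia.
  + exfalso; have h0 : k < n by move: (ltn_ord k); lia.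
    have h1 : k.+1 < n by move: (ltn_ord k); lia.
    move: (hb (Ordinal h0)) (hb (Ordinal h1)) => /=.
    rewrite eqxx (gtn_eqF (ltnSn _)) ltnn /=.
    move=> /esym h2 /esym/negbT h3; lia.
  + have h0 : k < n by move: (ltn_ord k); lia.
    have h0' : k' < n by move: (ltn_ord k'); lia.
    move: (hb (Ordinal h0)) (hb (Ordinal h0')) => /=; rewrite !eqxx /=.
    move=> /esym/orP [/eqP e|l1] /orP [/eqP e'|l2]; congr inr; apply: ord_inj; lia.
Qed.

Lemma numC n : 1 <= n -> num_avoiding n [:: p1112; p1121; p1221] = 2 * n.
Proof.
move=> hn; rewrite -(card_DT hn).
apply: (count_main (bx := @bC n) (kx := @kC n)).
- move=> x; rewrite avoids3; apply/and3P; split; apply/okP => i j lij;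
  rewrite /= !Pk_sb !ffunE !colb2; case: x => [a|k] /=; lia.
- exact: injC.
- move=> s ps; rewrite avoids3 => /and3P [/okP h2 /okP h3 /okP h5].
  have [x [e1 e2]] := classC_ex (sb := same_block s.1) (b := fun i => s.2 i == col2)
    (fun i => sb_refl i ps) (@sb_sym n s.1) (fun i j k => @sb_trans n s.1 i j k ps) h2 h3 h5.
  by exists x.
Qed.

Lemma numB n : 1 <= n -> num_avoiding n [:: p1112; p1121; p1122] = 2 * n.
Proof.
move=> hn; rewrite -(card_DT hn).
apply: (count_main (bx := @bB n) (kx := @kB n)).
- move=> x; rewrite avoids3; apply/and3P; split; apply/okP => i j lij;
  rewrite /= !Pk_sb !ffunE !colb2; case: x => [a|k] /=; lia.
- exact: injB.
- move=> s ps; rewrite avoids3 => /and3P [/okP h2 /okP h3 /okP h5].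
  have [x [e1 e2]] := classB_ex (sb := same_block s.1) (b := fun i => s.2 i == col2)
    (fun i => sb_refl i ps) (@sb_sym n s.1) (fun i j k => @sb_trans n s.1 i j k ps) h2 h3 h5.
  by exists x.
Qed.

Lemma numA n : 1 <= n -> num_avoiding n [:: p1111; p1112; p1221] = 2 * n.
Proof.
move=> hn; rewrite -(card_DT hn).
apply: (count_main (bx := @bA n) (kx := @kA n)).
- move=> x; rewrite avoids3; apply/and3P; split; apply/okP => i j lij;
  rewrite /= !Pk_sb !ffunE !colb2; case: x => [a|k] /=; try lia; do 2 case: ifP => ?; lia.
- exact: injA.
- move=> s ps; rewrite avoids3 => /and3P [/okP h2 /okP h3 /okP h5].
  have [x [e1 e2]] := classA_ex (sb := same_block s.1) (b := fun i => s.2 i == col2)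
    (fun i => sb_refl i ps) (@sb_sym n s.1) (fun i j k => @sb_trans n s.1 i j k ps) h2 h3 h5.
  by exists x.
Qed.

Theorem mainTheorem12 (n : nat) : 1 <= n ->
  num_avoiding n [:: p1111; p1112; p1221] = 2 * n /\
  num_avoiding n [:: p1112; p1121; p1122] = 2 * n /\
  num_avoiding n [:: p1112; p1121; p1221] = 2 * n.
Proof. move=> hn; split; [exact: numA | split; [exact: numB | exact: numC]]. Qed.
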